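(* Let $f\in\mathcal X_M'$ satisfy $f(0)=1$ and $\mathcal D_f\ne\{0\}$. Then for every $k\in\mathbb N$ the set $A_k(f)$ is $\tau_{AW}$-open in $\mathcal X_M'$, contains $f$, and is convex (if $g,h\in A_k(f)$ and $a\in[0,1]$ then $ag+(1-a)h\in A_k(f)$); moreover $\{A_k(f)\}_{k\in\mathbb N}$ is a local base for $\tau_{AW}$ at $f$ (indeed $A_{2k}(f)\subset V_k(f)$).
   Context: For $f:\mathbb R\to[-\infty,\infty]$, $\mathrm{epi}(f)=\{(\theta,b):b\ge f(\theta)\}$, $\mathcal D_f=\{\theta:f(\theta)<\infty\}$. On $\mathbb R^2$ use the box metric $d(x,y)=\max(|x_1-y_1|,|x_2-y_2|)$, $d(x,A)=\inf_{y\in A}d(x,y)$, $B_r=\{x:d(0,x)<r\}$, $\overline B_r=\{x:d(0,x)\le r\}$. $\mathcal X_M'$ is the set of lower semicontinuous convex $f:\mathbb R\to[0,\infty]$ with $f(0)<\infty$, with the Attouch–Wets topology $\tau_{AW}$, whose local base at $f$ is $V_k(f)=\{g\in\mathcal X_M':\sup_{x\in\overline B_k}|d(x,\mathrm{epi}(g))-d(x,\mathrm{epi}(f))|<1/k\}$, $k\in\mathbb N$. For $f\in\mathcal X_M'$ with $f(0)=1$, $\mathcal D_f\ne\{0\}$ and $k\in\mathbb N$: let $\eta_{l}=\inf\{\theta:(\theta,f(\theta))\in B_{2k+2}\}$, $\eta_{r}=\sup\{\theta:(\theta,f(\theta))\in B_{2k+2}\}$; fix $0<\epsilon<(\eta_r-\eta_l)/2$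 such that $d((a,f(a)),(b,f(b)))<1/(2k)$ for all $a,b\in[\eta_l,\eta_l+\epsilon]$ and for all $a,b\in[\eta_r-\epsilon,\eta_r]$; define $f^\sharp_k(\theta)=f(\theta)+1/(2k)$ for $\theta\in[\eta_l+\epsilon,\eta_r-\epsilon]$ and $f^\sharp_k(\theta)=+\infty$ otherwise. For $g$ let $\theta_{g,l}=\inf\mathcal D_g$, $\theta_{g,r}=\sup\mathcal D_g$; write $h\lll g$ if $\theta_{h,l}<\theta_{g,l}$, $\theta_{g,r}<\theta_{h,r}$ and $h(\theta)<g(\theta)$ for all $\theta\in[\theta_{g,l},\theta_{g,r}]$. Let $W(g)=\{h\in\mathcal X_M':h\lll g\}$ and $A_k(f)=V_k(f^\sharp_k)\cap W(f^\sharp_k)$. *)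

(* Defs.v *)
From Stdlib Require Import Reals Lra ClassicalEpsilon.
Open Scope R_scope.

(** Extended nonnegative values: [0,+oo] is represented by Fin r | PInf. *)
Inductive ER := Fin (r : R) | PInf.

Definition ER_le (x y : ER) : Prop :=
  match x, y with
  | _, PInf => True
  | PInf, Fin _ => False
  | Fin a, Fin b => a <= b
  end.

Definition ER_lt (x y : ER) : Prop :=
  match x, y with
  | Fin a, Fin b => a < b
  | Fin _, PInf => True
  | PInf, _ => False
  end.

Definition ER_add (x y : ER) : ER :=
  match x, y with
  | Fin a, Fin b => Fin (a + b)
  | _, _ => PInf
  end.

(** scaling by a real a >= 0, with the convention 0 * (+oo) = 0 *)
Definition ER_scale (a : R) (x : ER) : ER :=
  match x with
  | Fin r => Fin (a * r)
  | PInf => if Req_EM_T a 0 then Fin 0 else PInf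
  end.

Definition fn := R -> ER.

Definition epi (f : fn) (p : R * R) : Prop := ER_le (f (fst p)) (Fin (snd p)).
Definition dom (f : fn) (t : R) : Prop := f t <> PInf.

Definition boxd (x y : R * R) : R :=
  Rmax (Rabs (fst x - fst y)) (Rabs (snd x - snd y)).

Definition is_glb (E : R -> Prop) (m : R) : Prop :=
  (forall x, E x -> m <= x) /\ (forall b, (forall x, E x -> b <= x) -> b <= m).

Definition Rinf (E : R -> Prop) : R := epsilon (inhabits 0) (fun m => is_glb E m).
Definition Rsup (E : R -> Prop) : R := epsilon (inhabits 0) (fun m => is_lub E m).

Definition dist_epi (g : fn) (x : R * R) : R :=
  Rinf (fun t => exists y, epi g y /\ t = boxd x y).

Definition lsc (f : fn) : Prop :=
  forall x c, ER_lt (Fin c) (f x) ->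
    exists d, 0 < d /\ forall y, Rabs (y - x) < d -> ER_lt (Fin c) (f y).

Definition convex (f : fn) : Prop :=
  forall x y a, 0 < a < 1 ->
    ER_le (f (a * x + (1 - a) * y))
          (ER_add (ER_scale a (f x)) (ER_scale (1 - a) (f y))).

Definition XM (f : fn) : Prop :=
  lsc f /\ convex f /\ (forall t, ER_le (Fin 0) (f t)) /\ f 0 <> PInf.

(** V_k(g): sup_{x in closed box of radius k} |d(x,epi h) - d(x,epi g)| < 1/k *)
Definition V (k : nat) (g : fn) (h : fn) : Prop :=
  XM h /\
  exists c, c < / INR k /\
    forall x, boxd (0, 0) x <= INR k ->
      Rabs (dist_epi h x - dist_epi g x) <= c.

(** Attouch-Wets open sets of X_M' (topology with local bases V_k, k >= 1) *)
Definition AW_open (U : fn -> Prop) : Prop :=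
  (forall g, U g -> XM g) /\
  forall g, U g -> exists k, (0 < k)%nat /\ forall h, V k g h -> U h.

Definition graph_in_box (f : fn) (k : nat) (t : R) : Prop :=
  exists v, f t = Fin v /\ boxd (0, 0) (t, v) < 2 * INR k + 2.

Definition eta_l (f : fn) (k : nat) : R := Rinf (graph_in_box f k).
Definition eta_r (f : fn) (k : nat) : R := Rsup (graph_in_box f k).

Definition close_on (f : fn) (k : nat) (lo hi : R) : Prop :=
  forall a b, lo <= a <= hi -> lo <= b <= hi ->
    exists fa fb, f a = Fin fa /\ f b = Fin fb /\
      boxd (a, fa) (b, fb) < / (2 * INR k).

Definition eps_ok (f : fn) (k : nat) (e : R) : Prop :=
  0 < e /\ e < (eta_r f k - eta_l f k) / 2 /\
  close_on f k (eta_l f k) (eta_l f k + e) /\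
  close_on f k (eta_r f k - e) (eta_r f k).

Definition fsharp (f : fn) (k : nat) (e : R) : fn := fun t =>
  if Rle_dec (eta_l f k + e) t then
    if Rle_dec t (eta_r f k - e) then ER_add (f t) (Fin (/ (2 * INR k)))
    else PInf
  else PInf.

(** h <<< g ; theta_{g,l}, theta_{g,r} are inf / sup of dom g.
    "theta_{h,l} < theta_{g,l}" is written as: some point of dom h lies below theta_{g,l}. *)
Definition lll (h g : fn) : Prop :=
  exists l r, is_glb (dom g) l /\ is_lub (dom g) r /\
    (exists t, dom h t /\ t < l) /\ (exists t, dom h t /\ r < t) /\
    (forall t, l <= t <= r -> ER_lt (h t) (g t)).

Definition W (g : fn) (h : fn) : Prop := XM h /\ lll h g.

Definition A (f : fn) (k : nat) (e : R) (h : fn) : Prop :=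
  V k (fsharp f k e) h /\ W (fsharp f k e) h.

Definition comb (a : R) (g h : fn) : fn := fun t =>
  ER_add (ER_scale a (g t)) (ER_scale (1 - a) (h t)).

(* Main.v *)
Require Import Defs.
From Stdlib Require Import Reals Lra Lia ZArith ClassicalEpsilon Classical FunctionalExtensionality.
Open Scope R_scope.

Lemma abs_le_iff x c : Rabs x <= c <-> -c <= x <= c.
Proof. unfold Rabs; destruct (Rcase_abs x); split; intros; lra. Qed.
Lemma abs_lt_iff x c : Rabs x < c <-> -c < x < c.
Proof. unfold Rabs; destruct (Rcase_abs x); split; intros; lra. Qed.

Lemma boxd_le_iff x y c : boxd x y <= c <->
  Rabs (fst x - fst y) <= c /\ Rabs (snd x - snd y) <= c.
Proof.
  unfold boxd; split.
  - intros H; split; eapply Rle_trans; [apply Rmax_l| exact H | apply Rmax_r | exact H].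
  - intros [H1 H2]; apply Rmax_lub; auto.
Qed.
Lemma boxd_lt_iff x y c : boxd x y < c <->
  Rabs (fst x - fst y) < c /\ Rabs (snd x - snd y) < c.
Proof.
  unfold boxd; split.
  - intros H; split; eapply Rle_lt_trans; [apply Rmax_l| exact H | apply Rmax_r | exact H].
  - intros [H1 H2]; apply Rmax_lub_lt; auto.
Qed.
Lemma boxd_ge0 x y : 0 <= boxd x y.
Proof. unfold boxd. eapply Rle_trans; [apply Rabs_pos|apply Rmax_l]. Qed.
Lemma boxd_tri x y z : boxd x z <= boxd x y + boxd y z.
Proof.
  apply boxd_le_iff.
  pose proof (proj1 (boxd_le_iff x y _) (Rle_refl _)) as [A1 A2].
  pose proof (proj1 (boxd_le_iff y z _) (Rle_refl _)) as [B1 B2].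
  split.
  - replace (fst x - fst z) with ((fst x - fst y) + (fst y - fst z)) by ring.
    eapply Rle_trans; [apply Rabs_triang|lra].
  - replace (snd x - snd z) with ((snd x - snd y) + (snd y - snd z)) by ring.
    eapply Rle_trans; [apply Rabs_triang|lra].
Qed.
Lemma boxd_sym x y : boxd x y = boxd y x.
Proof. unfold boxd. rewrite (Rabs_minus_sym (fst x)), (Rabs_minus_sym (snd x)). reflexivity. Qed.
Lemma boxd_refl x : boxd x x = 0.
Proof. unfold boxd. rewrite !Rminus_diag, Rabs_R0. unfold Rmax; destruct Rle_dec; lra. Qed.

Lemma glb_exists (E : R -> Prop) : (exists x, E x) -> (exists m, forall x, E x -> m <= x) ->
  exists g, is_glb E g.
Proof.
  intros [x0 Hx0] [m Hm].
  destruct (completeness (fun y => E (- y))) as [s [Hs1 Hs2]].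
  - exists (- m). intros y Hy. specialize (Hm _ Hy). lra.
  - exists (- x0). rewrite Ropp_involutive. exact Hx0.
  - exists (- s). split.
    + intros x Hx. assert (- x <= s) by (apply Hs1; rewrite Ropp_involutive; exact Hx). lra.
    + intros b Hb. assert (s <= - b). { apply Hs2. intros y Hy. specialize (Hb _ Hy). lra. } lra.
Qed.
Lemma lub_exists (E : R -> Prop) : (exists x, E x) -> (exists m, forall x, E x -> x <= m) ->
  exists g, is_lub E g.
Proof.
  intros [x0 Hx0] [m Hm].
  destruct (completeness E) as [s Hs].
  - exists m. intros y Hy. apply Hm; exact Hy.
  - exists x0; exact Hx0.
  - exists s; exact Hs.
Qed.
Lemma Rinf_spec E : (exists x, E x) -> (exists m, forall x, E x -> m <= x) -> is_glb E (Rinf E).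
Proof. intros H1 H2. unfold Rinf. apply epsilon_spec. apply glb_exists; auto. Qed.
Lemma Rsup_spec E : (exists x, E x) -> (exists m, forall x, E x -> x <= m) -> is_lub E (Rsup E).
Proof. intros H1 H2. unfold Rsup. apply epsilon_spec. apply lub_exists; auto. Qed.
Lemma glb_approx E m r : is_glb E m -> m < r -> exists x, E x /\ x < r.
Proof.
  intros [H1 H2] Hr. apply NNPP. intro Hn.
  assert (r <= m). { apply H2. intros x Hx. apply Rnot_lt_le. intro. apply Hn. eauto. } lra.
Qed.
Lemma lub_approx E m r : is_lub E m -> r < m -> exists x, E x /\ r < x.
Proof.
  intros [H1 H2] Hr. apply NNPP. intro Hn.
  assert (m <= r). { apply H2. intros x Hx. apply Rnot_lt_le. intro. apply Hn. eauto. } lra.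
Qed.
Lemma glb_unique E a b : is_glb E a -> is_glb E b -> a = b.
Proof. intros [A1 A2] [B1 B2]. apply Rle_antisym; auto. Qed.
Lemma lub_unique E a b : is_lub E a -> is_lub E b -> a = b.
Proof. intros [A1 A2] [B1 B2]. apply Rle_antisym; auto. Qed.

Definition dom_ne (g : fn) := exists t, g t <> PInf.
Definition DE (g : fn) x := fun t => exists y, epi g y /\ t = boxd x y.
Lemma dist_spec g x : dom_ne g -> is_glb (DE g x) (dist_epi g x).
Proof.
  intros H. apply Rinf_spec.
  - destruct H as [t0 H]. destruct (g t0) as [v|] eqn:E; [|congruence].
    exists (boxd x (t0, v)). exists (t0, v). split; auto. unfold epi; simpl. rewrite E. simpl; lra.
  - exists 0. intros t [y [_ ->]]. apply boxd_ge0.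
Qed.
Lemma dist_le g x y : dom_ne g -> epi g y -> dist_epi g x <= boxd x y.
Proof. intros H Hy. apply (proj1 (dist_spec g x H)). exists y; auto. Qed.
Lemma dist_ge0 g x : dom_ne g -> 0 <= dist_epi g x.
Proof. intros H. apply (proj2 (dist_spec g x H)). intros t [y [_ ->]]. apply boxd_ge0. Qed.
Lemma dist_approx g x r : dom_ne g -> dist_epi g x < r -> exists y, epi g y /\ boxd x y < r.
Proof.
  intros H Hr. destruct (glb_approx _ _ _ (dist_spec g x H) Hr) as [t [[y [Hy ->]] Ht]]. eauto.
Qed.
Lemma dist_mono g h x : dom_ne g -> dom_ne h -> (forall y, epi g y -> epi h y) ->
  dist_epi h x <= dist_epi g x.
Proof.
  intros Hg Hh Hi. apply (proj2 (dist_spec g x Hg)). intros t [y [Hy ->]].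
  apply dist_le; auto.
Qed.
Lemma dist_upper g h x c : dom_ne g -> dom_ne h ->
  (forall y, epi g y -> boxd x y < dist_epi g x + 1 -> exists y', epi h y' /\ boxd y y' <= c) ->
  dist_epi h x <= dist_epi g x + c.
Proof.
  intros Hg Hh H. apply Rnot_lt_le. intro Hlt.
  set (e := Rmin 1 (dist_epi h x - dist_epi g x - c)).
  assert (He : 0 < e) by (unfold e; apply Rmin_pos; lra).
  destruct (dist_approx g x (dist_epi g x + e) Hg) as [y [Hy Hxy]]; [lra|].
  destruct (H y Hy) as [y' [Hy' Hyy']].
  { assert (e <= 1) by apply Rmin_l. lra. }
  pose proof (dist_le h x y' Hh Hy'). pose proof (boxd_tri x y y').
  assert (e <= dist_epi h x - dist_epi g x - c) by apply Rmin_r. lra.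
Qed.
Lemma dist_union g h p x : dom_ne g -> dom_ne h -> dom_ne p ->
  (forall y, epi p y -> epi g y \/ epi h y) ->
  Rmin (dist_epi g x) (dist_epi h x) <= dist_epi p x.
Proof.
  intros Hg Hh Hp Hi. apply (proj2 (dist_spec p x Hp)). intros t [y [Hy ->]].
  destruct (Hi y Hy) as [H|H].
  - eapply Rle_trans; [apply Rmin_l|]. apply dist_le; auto.
  - eapply Rle_trans; [apply Rmin_r|]. apply dist_le; auto.
Qed.
Lemma dist_in g y : dom_ne g -> epi g y -> dist_epi g y = 0.
Proof.
  intros H Hy. apply Rle_antisym.
  - rewrite <- (boxd_refl y). apply dist_le; auto.
  - apply dist_ge0; auto.
Qed.

Definition fv (g : fn) t : R := match g t with Fin r => r | PInf => 0 end.
Lemma fv_eq g t : g t <> PInf -> g t = Fin (fv g t).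
Proof. unfold fv. destruct (g t); congruence. Qed.
Lemma fv_fin g t r : g t = Fin r -> fv g t = r.
Proof. unfold fv. intros ->; reflexivity. Qed.

Lemma conv_at g p q t gp gq : convex g -> p < t < q -> g p = Fin gp -> g q = Fin gq ->
  exists gt, g t = Fin gt /\ gt <= gp + (t - p) / (q - p) * (gq - gp).
Proof.
  intros Hc Ht Hp Hq.
  set (a := (t - p) / (q - p)).
  assert (Ha : 0 < a < 1).
  { unfold a; split.
    - apply Rdiv_lt_0_compat; lra.
    - apply (Rmult_lt_reg_r (q - p)); [lra|]. unfold Rdiv. rewrite Rmult_assoc, Rinv_l; lra. }
  specialize (Hc q p a Ha).
  replace (a * q + (1 - a) * p) with t in Hc by (unfold a; field; lra).
  rewrite Hp, Hq in Hc. simpl in Hc.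
  destruct (g t) as [gt|]; [|contradiction].
  exists gt; split; auto. simpl in Hc. fold a. nra.
Qed.

Lemma conv_at2 g p q t gp gq : convex g -> p < t < q -> g p = Fin gp -> g q = Fin gq ->
  exists gt, g t = Fin gt /\ gt <= gq + (q - t) / (q - p) * (gp - gq).
Proof.
  intros Hc Ht Hp Hq. destruct (conv_at g p q t gp gq Hc Ht Hp Hq) as [gt [H1 H2]].
  exists gt; split; auto.
  replace (gq + (q - t) / (q - p) * (gp - gq)) with (gp + (t - p) / (q - p) * (gq - gp))
    by (field; lra). exact H2.
Qed.

Lemma conv_fin g p q t : convex g -> g p <> PInf -> g q <> PInf -> p <= t <= q -> g t <> PInf.
Proof.
  intros Hc Hp Hq Ht.
  destruct (Req_dec t p) as [->|]; auto. destruct (Req_dec t q) as [->|]; auto.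
  destruct (conv_at g p q t _ _ Hc ltac:(lra) (fv_eq g p Hp) (fv_eq g q Hq)) as [gt [Hgt _]].
  congruence.
Qed.

Lemma conv_bound g p q t : convex g -> g p <> PInf -> g q <> PInf -> p <= t <= q ->
  fv g t <= Rmax (fv g p) (fv g q).
Proof.
  intros Hc Hp Hq Ht.
  destruct (Req_dec t p) as [->|]; [apply Rmax_l|]. destruct (Req_dec t q) as [->|]; [apply Rmax_r|].
  destruct (conv_at g p q t _ _ Hc ltac:(lra) (fv_eq g p Hp) (fv_eq g q Hq)) as [gt [H1 H2]].
  rewrite (fv_fin _ _ _ H1).
  assert (0 <= (t - p) / (q - p) <= 1).
  { split. apply Rle_mult_inv_pos; lra.
    apply (Rmult_le_reg_r (q - p)); [lra|]. unfold Rdiv. rewrite Rmult_assoc, Rinv_l; lra. }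
  pose proof (Rmax_l (fv g p) (fv g q)). pose proof (Rmax_r (fv g p) (fv g q)).
  set (a := (t - p) / (q - p)) in *. nra.
Qed.

Lemma pos_lb (phi : R -> R) a b : a <= b ->
  (forall x, a <= x <= b -> 0 < phi x) ->
  (forall x, a <= x <= b -> forall c, c < phi x -> exists d, 0 < d /\
      forall y, a <= y <= b -> Rabs (y - x) < d -> c < phi y) ->
  exists del, 0 < del /\ forall x, a <= x <= b -> del <= phi x.
Proof.
  intros Hab Hpos Hlsc.
  set (S := fun y => a <= y <= b /\ exists del, 0 < del /\ forall x, a <= x <= y -> del <= phi x).
  assert (Sa : S a).
  { split; [lra|]. exists (phi a). split; [apply Hpos; lra|]. intros x Hx.
    replace x with a by lra. lra. }
  destruct (lub_exists S) as [s Hs].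
  { exists a; exact Sa. } { exists b. intros x [Hx _]. lra. }
  assert (Has : a <= s) by (apply (proj1 Hs); exact Sa).
  assert (Hsb : s <= b) by (apply (proj2 Hs); intros x [Hx _]; lra).
  destruct (Hlsc s ltac:(lra) (phi s / 2)) as [d [Hd Hnd]].
  { pose proof (Hpos s ltac:(lra)). lra. }
  destruct (lub_approx S s (s - d) Hs ltac:(lra)) as [y [[Hy [dy [Hdy Hy2]]] Hys]].
  set (z := Rmin (s + d / 2) b).
  assert (Sz : S z).
  { split. { unfold z. split. apply Rmin_glb; lra. apply Rmin_r. }
    exists (Rmin dy (phi s / 2)). split.
    { apply Rmin_pos; auto. pose proof (Hpos s ltac:(lra)). lra. }
    intros x Hx. destruct (Rle_dec x y).
    - eapply Rle_trans; [apply Rmin_l|]. apply Hy2; lra.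
    - eapply Rle_trans; [apply Rmin_r|]. left. apply Hnd.
      + assert (z <= b) by apply Rmin_r. lra.
      + apply abs_lt_iff. assert (z <= s + d/2) by apply Rmin_l. lra. }
  assert (z <= s) by (apply (proj1 Hs); exact Sz).
  destruct (Rle_dec b (s + d / 2)).
  - assert (z = b) by (unfold z; apply Rmin_right; lra).
    destruct Sz as [_ [del [H1 H2]]]. exists del; split; auto. intros x Hx. apply H2. lra.
  - assert (z = s + d/2) by (unfold z; apply Rmin_left; lra). lra.
Qed.

Lemma conv_usc g t1 t2 x c : convex g -> g t1 <> PInf -> g t2 <> PInf -> t1 < x < t2 ->
  fv g x < c -> exists d, 0 < d /\ forall y, Rabs (y - x) < d -> g y <> PInf /\ fv g y < c.
Proof.
  intros Hc H1 H2 Hx Hlt.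
  assert (Hgx : g x <> PInf) by (apply (conv_fin g t1 t2); auto; lra).
  set (K := Rabs (fv g t2 - fv g x) + Rabs (fv g t1 - fv g x) + 1).
  assert (HK : 0 < K) by (unfold K; pose proof (Rabs_pos (fv g t2 - fv g x));
                          pose proof (Rabs_pos (fv g t1 - fv g x)); lra).
  set (m := Rmin (t2 - x) (x - t1)).
  assert (Hm : 0 < m) by (unfold m; apply Rmin_pos; lra).
  set (r := Rmin (1/2) ((c - fv g x) / K)).
  assert (Hr : 0 < r) by (unfold r; apply Rmin_pos; [lra| apply Rdiv_lt_0_compat; lra]).
  assert (Hrh : r <= 1/2) by apply Rmin_l.
  assert (HrK : r * K <= c - fv g x).
  { assert (r <= (c - fv g x) / K) by apply Rmin_r.
    eapply Rle_trans; [apply Rmult_le_compat_r; [lra| exact H]|]. right; field; lra. }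
  exists (m * r). split; [nra|].
  intros y Hy. apply abs_lt_iff in Hy.
  assert (Hm1 : m <= t2 - x) by apply Rmin_l. assert (Hm2 : m <= x - t1) by apply Rmin_r.
  assert (HKa : fv g t2 - fv g x <= K).
  { unfold K. pose proof (Rle_abs (fv g t2 - fv g x)). pose proof (Rabs_pos (fv g t1 - fv g x)). lra. }
  assert (HKb : fv g t1 - fv g x <= K).
  { unfold K. pose proof (Rle_abs (fv g t1 - fv g x)). pose proof (Rabs_pos (fv g t2 - fv g x)). lra. }
  assert (Hr1 : m * r <= r * (t2 - x)) by nra.
  assert (Hr2 : m * r <= r * (x - t1)) by nra.
  destruct (Rtotal_order y x) as [Hyx|[Hyx|Hyx]].
  -
    assert (t1 < y) by nra.
    destruct (conv_at2 g t1 x y (fv g t1) (fv g x) Hc ltac:(lra) (fv_eq g t1 H1) (fv_eq g x Hgx))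
      as [gy [E1 E2]].
    split; [congruence|]. rewrite (fv_fin _ _ _ E1).
    set (l := (x - y) / (x - t1)) in *.
    assert (Hl : 0 < l < r).
    { unfold l; split. apply Rdiv_lt_0_compat; lra.
      apply (Rmult_lt_reg_r (x - t1)); [lra|]. unfold Rdiv. rewrite Rmult_assoc, Rinv_l; nra. }
    destruct (Rle_dec (fv g t1 - fv g x) 0). { nra. }
    assert (l * (fv g t1 - fv g x) < r * (fv g t1 - fv g x)) by (apply Rmult_lt_compat_r; lra).
    assert (r * (fv g t1 - fv g x) <= r * K) by (apply Rmult_le_compat_l; lra).
    lra.
  - subst. split; auto; lra.
  - assert (y < t2) by nra.
    destruct (conv_at g x t2 y (fv g x) (fv g t2) Hc ltac:(lra) (fv_eq g x Hgx) (fv_eq g t2 H2))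
      as [gy [E1 E2]].
    split; [congruence|]. rewrite (fv_fin _ _ _ E1).
    set (l := (y - x) / (t2 - x)) in *.
    assert (Hl : 0 < l < r).
    { unfold l; split. apply Rdiv_lt_0_compat; lra.
      apply (Rmult_lt_reg_r (t2 - x)); [lra|]. unfold Rdiv. rewrite Rmult_assoc, Rinv_l; nra. }
    destruct (Rle_dec (fv g t2 - fv g x) 0). { nra. }
    assert (l * (fv g t2 - fv g x) < r * (fv g t2 - fv g x)) by (apply Rmult_lt_compat_r; lra).
    assert (r * (fv g t2 - fv g x) <= r * K) by (apply Rmult_le_compat_l; lra).
    lra.
Qed.

Lemma nat_big r : exists m : nat, (0 < m)%nat /\ r < INR m.
Proof.
  destruct (archimed (Rabs r)) as [H1 _].
  assert (0 <= IZR (up (Rabs r))) by (pose proof (Rabs_pos r); lra).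
  exists (S (Z.to_nat (up (Rabs r)))). split; [lia|].
  rewrite S_INR, INR_IZR_INZ, Z2Nat.id.
  - pose proof (Rle_abs r). lra.
  - apply le_IZR. lra.
Qed.

Lemma gib0 f k : f 0 = Fin 1 -> graph_in_box f k 0.
Proof.
  intros H. exists 1. split; auto. apply boxd_lt_iff; simpl.
  pose proof (pos_INR k). rewrite Rminus_diag, Rabs_R0. split; [lra|].
  rewrite Rabs_minus_sym, Rminus_0_r, Rabs_R1. lra.
Qed.
Lemma gib_bound f k t : graph_in_box f k t -> Rabs t < 2 * INR k + 2.
Proof.
  intros [v [_ H]]. apply boxd_lt_iff in H. simpl in H. destruct H as [H _].
  rewrite Rabs_minus_sym, Rminus_0_r in H. exact H.
Qed.
Lemma eta_l_spec f k : f 0 = Fin 1 -> is_glb (graph_in_box f k) (eta_l f k).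
Proof.
  intros H. apply Rinf_spec. exists 0; apply gib0; auto.
  exists (- (2 * INR k + 2)). intros x Hx. apply gib_bound, abs_lt_iff in Hx. lra.
Qed.
Lemma eta_r_spec f k : f 0 = Fin 1 -> is_lub (graph_in_box f k) (eta_r f k).
Proof.
  intros H. apply Rsup_spec. exists 0; apply gib0; auto.
  exists (2 * INR k + 2). intros x Hx. apply gib_bound, abs_lt_iff in Hx. lra.
Qed.
Lemma gib_range f k t : f 0 = Fin 1 -> graph_in_box f k t -> eta_l f k <= t <= eta_r f k.
Proof.
  intros H Ht. split.
  - apply (proj1 (eta_l_spec f k H)); auto.
  - apply (proj1 (eta_r_spec f k H)); auto.
Qed.

Lemma eps_basic f k e : eps_ok f k e ->
  0 < e /\ eta_l f k < eta_l f k + e /\ eta_l f k + e < eta_r f k - e /\ eta_r f k - e < eta_r f k.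
Proof. intros [H1 [H2 _]]. lra. Qed.

Lemma f_fin f k e t : XM f -> eps_ok f k e -> eta_l f k <= t <= eta_r f k -> f t <> PInf.
Proof.
  intros [_ [Hc _]] He Ht. pose proof (eps_basic f k e He) as Hb.
  destruct He as [_ [_ [Hl Hr]]].
  destruct (Hl (eta_l f k) (eta_l f k) ltac:(lra) ltac:(lra)) as [a [_ [Ha _]]].
  destruct (Hr (eta_r f k) (eta_r f k) ltac:(lra) ltac:(lra)) as [b [_ [Hb' _]]].
  apply (conv_fin f (eta_l f k) (eta_r f k)); auto; congruence.
Qed.

Definition qq (k : nat) := / (2 * INR k).
Lemma qq_pos k : (0 < k)%nat -> 0 < qq k.
Proof. intros. unfold qq. apply Rinv_0_lt_compat. apply lt_0_INR in H. lra. Qed.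
Lemma qq_half k : (0 < k)%nat -> 2 * qq k = / INR k.
Proof. intros. unfold qq. apply lt_0_INR in H. field. lra. Qed.

Lemma fsharp_in f k e t : eta_l f k + e <= t <= eta_r f k - e ->
  fsharp f k e t = ER_add (f t) (Fin (qq k)).
Proof. intros Ht. unfold fsharp. destruct Rle_dec; [|lra]. destruct Rle_dec; [|lra]. reflexivity. Qed.
Lemma fsharp_in' f k e t : XM f -> eps_ok f k e -> eta_l f k + e <= t <= eta_r f k - e ->
  fsharp f k e t = Fin (fv f t + qq k).
Proof.
  intros Hf He Ht. rewrite fsharp_in; auto.
  pose proof (eps_basic f k e He).
  rewrite (fv_eq f t); [reflexivity|]. apply (f_fin f k e); auto. lra.
Qed.
Lemma fsharp_out f k e t : ~ (eta_l f k + e <= t <= eta_r f k - e) -> fsharp f k e t = PInf.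
Proof. intros Ht. unfold fsharp. destruct Rle_dec; auto. destruct Rle_dec; auto. lra. Qed.

Lemma dom_fsharp f k e t : XM f -> eps_ok f k e ->
  (dom (fsharp f k e) t <-> eta_l f k + e <= t <= eta_r f k - e).
Proof.
  intros Hf He. unfold dom. split.
  - intros H. apply NNPP. intro Hn. apply H. apply fsharp_out; auto.
  - intros H. rewrite (fsharp_in' f k e t Hf He H). discriminate.
Qed.

Lemma lll_iff f k e h : XM f -> eps_ok f k e ->
  (lll h (fsharp f k e) <->
   (exists t, dom h t /\ t < eta_l f k + e) /\ (exists t, dom h t /\ eta_r f k - e < t) /\
   (forall t, eta_l f k + e <= t <= eta_r f k - e -> ER_lt (h t) (fsharp f k e t))).
Proof.
  intros Hf He. pose proof (eps_basic f k e He) as Hb.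
  assert (G : is_glb (dom (fsharp f k e)) (eta_l f k + e)).
  { split. intros x Hx. apply (dom_fsharp f k e x Hf He) in Hx. lra.
    intros b Hb'. apply Hb'. apply (dom_fsharp f k e _ Hf He). lra. }
  assert (L : is_lub (dom (fsharp f k e)) (eta_r f k - e)).
  { split. intros x Hx. apply (dom_fsharp f k e x Hf He) in Hx. lra.
    intros b Hb'. apply Hb'. apply (dom_fsharp f k e _ Hf He). lra. }
  split.
  - intros [l [r [Hl [Hr [H1 [H2 H3]]]]]].
    rewrite (glb_unique _ _ _ Hl G) in *. rewrite (lub_unique _ _ _ Hr L) in *. auto.
  - intros [H1 [H2 H3]]. exists (eta_l f k + e), (eta_r f k - e). auto.
Qed.

Lemma XM_ne h : XM h -> dom_ne h.
Proof. intros [_ [_ [_ H]]]. exists 0; exact H. Qed.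
Lemma fsharp_ne f k e : XM f -> eps_ok f k e -> dom_ne (fsharp f k e).
Proof.
  intros Hf He. pose proof (eps_basic f k e He). exists (eta_l f k + e).
  apply (dom_fsharp f k e _ Hf He). lra.
Qed.
Lemma fv_nonneg h t : XM h -> 0 <= fv h t.
Proof. intros [_ [_ [H _]]]. specialize (H t). unfold fv. destruct (h t); simpl in *; lra. Qed.

Lemma close_vert f k lo hi a b : close_on f k lo hi -> lo <= a <= hi -> lo <= b <= hi ->
  f a <> PInf /\ f b <> PInf /\ Rabs (a - b) < qq k /\ Rabs (fv f a - fv f b) < qq k.
Proof.
  intros H Ha Hb. destruct (H a b Ha Hb) as [fa [fb [E1 [E2 E3]]]].
  apply boxd_lt_iff in E3. simpl in E3. rewrite (fv_fin _ _ _ E1), (fv_fin _ _ _ E2).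
  unfold qq. repeat split; try congruence; tauto.
Qed.

Lemma lsc_interval f lo hi : XM f -> (forall t, lo <= t <= hi -> f t <> PInf) ->
  forall (s : R), (forall x, lo <= x <= hi -> forall c, c < fv f x - s -> exists d, 0 < d /\
      forall y, lo <= y <= hi -> Rabs (y - x) < d -> c < fv f y - s).
Proof.
  intros [Hl _] Hfin s x Hx c Hc.
  destruct (Hl x (c + s)) as [d [Hd H]].
  { rewrite (fv_eq f x (Hfin x Hx)). simpl. lra. }
  exists d; split; auto. intros y Hy Hyx. specialize (H y Hyx).
  rewrite (fv_eq f y (Hfin y Hy)) in H. simpl in H. lra.
Qed.

Lemma lemD f k e : XM f -> f 0 = Fin 1 -> (0 < k)%nat -> eps_ok f k e ->
  exists c, c < / INR k /\ forall x, boxd (0, 0) x <= INR k ->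
    Rabs (dist_epi f x - dist_epi (fsharp f k e) x) <= c.
Proof.
  intros Hf Hf0 Hk He.
  pose proof (eps_basic f k e He) as Hb.
  pose proof (qq_pos k Hk) as Hq. pose proof (qq_half k Hk) as Hq2.
  pose proof He as [_ [_ [Hcl Hcr]]].
  set (el := eta_l f k) in *. set (er := eta_r f k) in *.
  assert (Hfin : forall t, el <= t <= er -> f t <> PInf) by (intros; apply (f_fin f k e); auto).
  destruct (pos_lb (fun t => fv f t - (fv f (el + e) - qq k)) el (el + e)) as [dl [Hdl Hl]].
  { lra. }
  { intros x Hx. destruct (close_vert f k el (el + e) x (el + e) Hcl Hx ltac:(lra)) as [_ [_ [_ H]]].
    apply abs_lt_iff in H. lra. }
  { apply lsc_interval; auto. intros; apply Hfin; lra. }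
  destruct (pos_lb (fun t => fv f t - (fv f (er - e) - qq k)) (er - e) er) as [dr [Hdr Hr]].
  { lra. }
  { intros x Hx. destruct (close_vert f k (er - e) er x (er - e) Hcr Hx ltac:(lra)) as [_ [_ [_ H]]].
    apply abs_lt_iff in H. lra. }
  { apply lsc_interval; auto. intros; apply Hfin; lra. }
  simpl in Hl, Hr.
  set (del := Rmin (Rmin dl dr) (qq k)).
  assert (Hd1 : del <= dl) by (unfold del; eapply Rle_trans; [apply Rmin_l|apply Rmin_l]).
  assert (Hd2 : del <= dr) by (unfold del; eapply Rle_trans; [apply Rmin_l|apply Rmin_r]).
  assert (Hd3 : del <= qq k) by (unfold del; apply Rmin_r).
  assert (Hd0 : 0 < del) by (unfold del; repeat apply Rmin_pos; auto).
  exists (2 * qq k - del). split; [lra|].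
  intros x Hx.
  assert (Hne : dom_ne f) by (apply XM_ne; auto).
  assert (Hne' : dom_ne (fsharp f k e)) by (apply fsharp_ne; auto).
  assert (M1 : dist_epi f x <= dist_epi (fsharp f k e) x).
  { apply dist_mono; auto. intros [t v] Hy. unfold epi in Hy |- *. cbn [fst snd] in Hy |- *.
    destruct (Rle_dec (el + e) t); [destruct (Rle_dec t (er - e))|].
    - rewrite (fsharp_in' f k e t Hf He ltac:(fold el er; lra)) in Hy. simpl in Hy.
      rewrite (fv_eq f t (Hfin t ltac:(lra))). simpl. lra.
    - rewrite (fsharp_out f k e t ltac:(fold el er; lra)) in Hy. contradiction.
    - rewrite (fsharp_out f k e t ltac:(fold el er; lra)) in Hy. contradiction. }
  assert (M2 : dist_epi (fsharp f k e) x <= dist_epi f x + (2 * qq k - del)).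
  { apply dist_upper; auto. intros [t v] Hy Hxy.
    assert (E01 : epi f (0, 1)) by (unfold epi; simpl; rewrite Hf0; simpl; lra).
    pose proof (dist_le f x (0, 1) Hne E01).
    pose proof (boxd_tri x (0, 0) (0, 1)).
    assert (boxd (0,0) (0,1) = 1).
    { unfold boxd; simpl. rewrite Rminus_diag, Rabs_R0, Rminus_0_l, Rabs_Ropp, Rabs_R1.
      unfold Rmax; destruct Rle_dec; lra. }
    rewrite (boxd_sym x (0,0)) in *.
    pose proof (boxd_tri (0,0) x (t, v)).
    assert (Hyb : boxd (0,0) (t,v) < 2 * INR k + 2) by lra.
    unfold epi in Hy; simpl in Hy.
    destruct (f t) as [ft|] eqn:Eft; [|contradiction]. simpl in Hy.
    assert (Hft0 : 0 <= ft) by (pose proof (fv_nonneg f t Hf) as Z; rewrite (fv_fin _ _ _ Eft) in Z; exact Z).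
    assert (Hgib : graph_in_box f k t).
    { exists ft. split; auto. apply boxd_lt_iff in Hyb. simpl in Hyb. apply boxd_lt_iff; simpl.
      destruct Hyb as [Y1 Y2]. split; auto.
      rewrite Rminus_0_l, Rabs_Ropp, Rabs_right by lra.
      rewrite Rminus_0_l, Rabs_Ropp in Y2. pose proof (Rle_abs v). lra. }
    destruct (gib_range f k t Hf0 Hgib) as [Ht1 Ht2]. fold el er in Ht1, Ht2.
    destruct (Rlt_dec t (el + e)).
    - exists (el + e, Rmax v (fv f (el + e)) + qq k). split.
      + unfold epi; cbn [fst snd]. rewrite (fsharp_in' f k e (el + e) Hf He ltac:(fold el er; lra)). simpl.
        pose proof (Rmax_r v (fv f (el + e))). lra.
      + apply boxd_le_iff; simpl.
        destruct (close_vert f k el (el + e) t (el + e) Hcl ltac:(lra) ltac:(lra)) as [_ [_ [HH1 _]]].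
        specialize (Hl t ltac:(lra)). rewrite (fv_fin _ _ _ Eft) in Hl.
        split; [lra|]. apply abs_le_iff. unfold Rmax; destruct Rle_dec; lra.
    - destruct (Rle_dec t (er - e)).
      + exists (t, v + qq k). split.
        * unfold epi; cbn [fst snd]. rewrite (fsharp_in' f k e t Hf He ltac:(fold el er; lra)). simpl.
          rewrite (fv_fin _ _ _ Eft). lra.
        * apply boxd_le_iff; simpl. rewrite Rminus_diag, Rabs_R0. split; [lra|].
          apply abs_le_iff. lra.
      + exists (er - e, Rmax v (fv f (er - e)) + qq k). split.
        * unfold epi; cbn [fst snd]. rewrite (fsharp_in' f k e (er - e) Hf He ltac:(fold el er; lra)). simpl.
          pose proof (Rmax_r v (fv f (er - e))). lra.
        * apply boxd_le_iff; simpl.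
          destruct (close_vert f k (er - e) er t (er - e) Hcr ltac:(lra) ltac:(lra)) as [_ [_ [HH1 _]]].
          specialize (Hr t ltac:(lra)). rewrite (fv_fin _ _ _ Eft) in Hr.
          split; [lra|]. apply abs_le_iff. unfold Rmax; destruct Rle_dec; lra. }
  rewrite Rabs_minus_sym, Rabs_right; lra.
Qed.

Lemma ER_le_PInf z : ER_le z PInf.
Proof. destruct z; simpl; auto. Qed.
Lemma ER_lt_fin z F : ER_lt z (Fin F) -> exists r, z = Fin r /\ r < F.
Proof. destruct z; simpl; intros; [eauto|contradiction]. Qed.
Lemma ER_le_fin z F : ER_le z (Fin F) -> exists r, z = Fin r /\ r <= F.
Proof. destruct z; simpl; intros; [eauto|contradiction]. Qed.
Lemma scale_inf a : a <> 0 -> ER_scale a PInf = PInf.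
Proof. intros. simpl. destruct (Req_EM_T a 0); [contradiction|reflexivity]. Qed.

Lemma comb_fin a g h t x y : g t = Fin x -> h t = Fin y -> comb a g h t = Fin (a * x + (1 - a) * y).
Proof. intros E1 E2. unfold comb. rewrite E1, E2. reflexivity. Qed.
Lemma comb_inf a g h t : 0 < a < 1 -> (g t = PInf \/ h t = PInf) -> comb a g h t = PInf.
Proof.
  intros Ha [E|E]; unfold comb; rewrite E; rewrite scale_inf by lra.
  - destruct (ER_scale (1 - a) (h t)); reflexivity.
  - destruct (ER_scale a (g t)); reflexivity.
Qed.
Lemma comb_cases a g h t : 0 < a < 1 ->
  (exists x y, g t = Fin x /\ h t = Fin y /\ comb a g h t = Fin (a * x + (1 - a) * y)) \/
  comb a g h t = PInf.
Proof.
  intros Ha. destruct (g t) as [x|] eqn:E1; [destruct (h t) as [y|] eqn:E2|].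
  - left. exists x, y. repeat split; auto. apply comb_fin; auto.
  - right. apply comb_inf; auto.
  - right. apply comb_inf; auto.
Qed.

Lemma comb_0 g h : (forall t, ER_le (Fin 0) (h t)) -> comb 0 g h = h.
Proof.
  intros _. apply functional_extensionality. intros t. unfold comb.
  assert (ER_scale 0 (g t) = Fin 0).
  { destruct (g t); simpl. f_equal; ring. destruct (Req_EM_T 0 0); [reflexivity|lra]. }
  rewrite H. destruct (h t); simpl. f_equal; ring. destruct (Req_EM_T (1 - 0) 0); [lra|reflexivity].
Qed.
Lemma comb_1 g h : comb 1 g h = g.
Proof.
  apply functional_extensionality. intros t. unfold comb.
  assert (ER_scale (1 - 1) (h t) = Fin 0).
  { destruct (h t); simpl. f_equal; ring. destruct (Req_EM_T (1 - 1) 0); [reflexivity|lra]. }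
  rewrite H. destruct (g t); simpl. f_equal; ring. destruct (Req_EM_T 1 0); [lra|reflexivity].
Qed.

Lemma conv_pt g x y gx gy b : convex g -> g x = Fin gx -> g y = Fin gy -> 0 < b < 1 ->
  exists gz, g (b * x + (1 - b) * y) = Fin gz /\ gz <= b * gx + (1 - b) * gy.
Proof.
  intros Hc E1 E2 Hb. specialize (Hc x y b Hb). rewrite E1, E2 in Hc. simpl in Hc.
  apply ER_le_fin in Hc. exact Hc.
Qed.

Lemma comb_XM a g h : XM g -> XM h -> 0 < a < 1 -> XM (comb a g h).
Proof.
  intros Hg Hh Ha. pose proof Hg as [Lg [Cg [Ng Zg]]]. pose proof Hh as [Lh [Ch [Nh Zh]]].
  split; [|split; [|split]].
  - intros x c Hc. destruct (comb_cases a g h x Ha) as [[gx [hx [E1 [E2 E3]]]]|E].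
    + rewrite E3 in Hc. simpl in Hc.
      set (w := (a * gx + (1 - a) * hx - c) / 2).
      assert (Hw : 0 < w) by (unfold w; lra).
      destruct (Lg x (gx - w)) as [d1 [Hd1 H1]]. { rewrite E1; simpl; lra. }
      destruct (Lh x (hx - w)) as [d2 [Hd2 H2]]. { rewrite E2; simpl; lra. }
      exists (Rmin d1 d2). split; [apply Rmin_pos; auto|]. intros y Hy.
      specialize (H1 y ltac:(eapply Rlt_le_trans; [exact Hy|apply Rmin_l])).
      specialize (H2 y ltac:(eapply Rlt_le_trans; [exact Hy|apply Rmin_r])).
      destruct (comb_cases a g h y Ha) as [[gy [hy [F1 [F2 F3]]]]|F].
      * rewrite F3. rewrite F1 in H1. rewrite F2 in H2. simpl in *.
        assert (a * (gx - w) < a * gy) by (apply Rmult_lt_compat_l; lra).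
        assert ((1 - a) * (hx - w) < (1 - a) * hy) by (apply Rmult_lt_compat_l; lra).
        unfold w in *. lra.
      * rewrite F. exact I.
    + destruct (g x) as [gx|] eqn:E1.
      * destruct (h x) as [hx|] eqn:E2.
        { rewrite (comb_fin a g h x gx hx E1 E2) in E. discriminate. }
        destruct (Lh x (c / (1 - a))) as [d [Hd H]]. { rewrite E2; exact I. }
        exists d; split; auto. intros y Hy. specialize (H y Hy).
        destruct (comb_cases a g h y Ha) as [[gy [hy [F1 [F2 F3]]]]|F].
        -- rewrite F3. rewrite F2 in H. simpl in *. specialize (Ng y). rewrite F1 in Ng. simpl in Ng.
           assert ((1 - a) * (c / (1 - a)) < (1 - a) * hy) by (apply Rmult_lt_compat_l; lra).
           replace ((1 - a) * (c / (1 - a))) with c in H0 by (field; lra).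
           assert (0 <= a * gy) by (apply Rmult_le_pos; lra). lra.
        -- rewrite F. exact I.
      * destruct (Lg x (c / a)) as [d [Hd H]]. { rewrite E1; exact I. }
        exists d; split; auto. intros y Hy. specialize (H y Hy).
        destruct (comb_cases a g h y Ha) as [[gy [hy [F1 [F2 F3]]]]|F].
        -- rewrite F3. rewrite F1 in H. simpl in *. specialize (Nh y). rewrite F2 in Nh. simpl in Nh.
           assert (a * (c / a) < a * gy) by (apply Rmult_lt_compat_l; lra).
           replace (a * (c / a)) with c in H0 by (field; lra).
           assert (0 <= (1 - a) * hy) by (apply Rmult_le_pos; lra). lra.
        -- rewrite F. exact I.
  - intros x y b Hb.
    destruct (comb_cases a g h x Ha) as [[gx [hx [E1 [E2 E3]]]]|E].
    + destruct (comb_cases a g h y Ha) as [[gy [hy [F1 [F2 F3]]]]|F].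
      * rewrite E3, F3. simpl.
        destruct (conv_pt g x y gx gy b Cg E1 F1 Hb) as [gz [G1 G2]].
        destruct (conv_pt h x y hx hy b Ch E2 F2 Hb) as [hz [H1 H2]].
        rewrite (comb_fin a g h _ gz hz G1 H1). simpl.
        assert (a * gz <= a * (b * gx + (1 - b) * gy)) by (apply Rmult_le_compat_l; lra).
        assert ((1 - a) * hz <= (1 - a) * (b * hx + (1 - b) * hy)) by (apply Rmult_le_compat_l; lra).
        nra.
      * rewrite F. rewrite (scale_inf (1 - b)) by lra. destruct (ER_scale b _); apply ER_le_PInf.
    + rewrite E. rewrite (scale_inf b) by lra. apply ER_le_PInf.
  - intros t. destruct (comb_cases a g h t Ha) as [[gx [hx [E1 [E2 E3]]]]|E].
    + rewrite E3. specialize (Ng t). specialize (Nh t). rewrite E1 in Ng. rewrite E2 in Nh.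
      simpl in *. assert (0 <= a * gx) by (apply Rmult_le_pos; lra).
      assert (0 <= (1 - a) * hx) by (apply Rmult_le_pos; lra). lra.
    + rewrite E. exact I.
  - destruct (g 0) as [gx|] eqn:E1; [|contradiction]. destruct (h 0) as [hx|] eqn:E2; [|contradiction].
    rewrite (comb_fin a g h 0 gx hx E1 E2). discriminate.
Qed.

Lemma part_self f k e : XM f -> f 0 = Fin 1 -> (0 < k)%nat -> eps_ok f k e -> A f k e f.
Proof.
  intros Hf Hf0 Hk He. pose proof (eps_basic f k e He) as Hb.
  split.
  - split; auto. destruct (lemD f k e Hf Hf0 Hk He) as [c [H1 H2]]. eauto.
  - split; auto. apply lll_iff; auto. split; [|split].
    + exists (eta_l f k). split; [|lra]. apply (f_fin f k e); auto; lra.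
    + exists (eta_r f k). split; [|lra]. apply (f_fin f k e); auto; lra.
    + intros t Ht. rewrite (fsharp_in' f k e t Hf He Ht).
      rewrite (fv_eq f t) by (apply (f_fin f k e); auto; lra). simpl.
      pose proof (qq_pos k Hk). lra.
Qed.


Lemma part2 f k e h : XM f -> f 0 = Fin 1 -> (0 < k)%nat -> eps_ok f (2 * k) e ->
  A f (2 * k) e h -> V k f h.
Proof.
  intros Hf Hf0 Hk He [[Hh [c1 [Hc1 H1]]] _].
  destruct (lemD f (2 * k) e Hf Hf0 ltac:(lia) He) as [c2 [Hc2 H2]].
  assert (E : INR (2 * k) = 2 * INR k) by (rewrite mult_INR; simpl; ring).
  rewrite E in *. pose proof (lt_0_INR k Hk).
  split; auto. exists (c1 + c2). split.
  - replace (/ INR k) with (/ (2 * INR k) + / (2 * INR k)) by (field; lra). lra.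
  - intros x Hx. assert (Hx2 : boxd (0, 0) x <= 2 * INR k) by lra.
    specialize (H1 x Hx2). specialize (H2 x Hx2).
    apply abs_le_iff in H1. apply abs_le_iff in H2. apply abs_le_iff. lra.
Qed.

Lemma epi_fsharp_sub f k e p a g h : XM f -> eps_ok f k e -> 0 < a < 1 ->
  (forall t, eta_l f k + e <= t <= eta_r f k - e -> ER_lt (g t) (fsharp f k e t)) ->
  (forall t, eta_l f k + e <= t <= eta_r f k - e -> ER_lt (h t) (fsharp f k e t)) ->
  epi (fsharp f k e) p -> epi (comb a g h) p.
Proof.
  intros Hf He Ha Hg Hh. destruct p as [t v]. unfold epi. cbn [fst snd]. intros Hp.
  destruct (Rle_dec (eta_l f k + e) t); [destruct (Rle_dec t (eta_r f k - e))|].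
  - specialize (Hg t ltac:(lra)). specialize (Hh t ltac:(lra)).
    rewrite (fsharp_in' f k e t Hf He ltac:(lra)) in Hg, Hh, Hp. simpl in Hp.
    destruct (ER_lt_fin _ _ Hg) as [x [E1 E2]]. destruct (ER_lt_fin _ _ Hh) as [y [F1 F2]].
    rewrite (comb_fin a g h t x y E1 F1). simpl. nra.
  - rewrite (fsharp_out f k e t ltac:(lra)) in Hp. contradiction.
  - rewrite (fsharp_out f k e t ltac:(lra)) in Hp. contradiction.
Qed.

Lemma part_conv f k e g h a : XM f -> f 0 = Fin 1 -> (0 < k)%nat -> eps_ok f k e ->
  A f k e g -> A f k e h -> 0 <= a <= 1 -> A f k e (comb a g h).
Proof.
  intros Hf Hf0 Hk He Ag Ah Ha.
  destruct (Req_dec a 0) as [->|Ha0].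
  { rewrite comb_0; auto. destruct Ah as [[[_ [_ [N _]]] _] _]. exact N. }
  destruct (Req_dec a 1) as [->|Ha1].
  { rewrite comb_1; auto. }
  assert (Ha' : 0 < a < 1) by lra. pose proof (eps_basic f k e He) as Hb.
  destruct Ag as [[Xg [cg [Hcg Hg]]] [_ Wg]]. destruct Ah as [[Xh [ch [Hch Hh]]] [_ Wh]].
  apply (lll_iff f k e g Hf He) in Wg. apply (lll_iff f k e h Hf He) in Wh.
  destruct Wg as [[tg1 [Dg1 Tg1]] [[tg2 [Dg2 Tg2]] Mg]].
  destruct Wh as [[th1 [Dh1 Th1]] [[th2 [Dh2 Th2]] Mh]].
  assert (Xc : XM (comb a g h)) by (apply comb_XM; auto).
  assert (Cg : convex g) by apply Xg. assert (Ch : convex h) by apply Xh.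
  split.
  - split; auto. exists (Rmax cg ch). split; [apply Rmax_lub_lt; auto|].
    intros x Hx. specialize (Hg x Hx). specialize (Hh x Hx).
    assert (M1 : dist_epi (comb a g h) x <= dist_epi (fsharp f k e) x).
    { apply dist_mono; [apply fsharp_ne; auto| apply XM_ne; auto|].
      intros p. apply epi_fsharp_sub; auto. }
    assert (M2 : Rmin (dist_epi g x) (dist_epi h x) <= dist_epi (comb a g h) x).
    { apply dist_union; try apply XM_ne; auto.
      intros [t v]. unfold epi; cbn [fst snd]. intros Hp.
      destruct (comb_cases a g h t Ha') as [[x1 [y1 [E1 [E2 E3]]]]|E].
      - rewrite E3 in Hp. simpl in Hp. rewrite E1, E2. simpl.
        destruct (Rle_dec x1 v); [left; auto|]. right. nra.
      - rewrite E in Hp. contradiction. }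
    apply abs_le_iff in Hg. apply abs_le_iff in Hh.
    pose proof (Rmax_l cg ch). pose proof (Rmax_r cg ch).
    apply abs_le_iff. unfold Rmin in M2. destruct (Rle_dec (dist_epi g x) (dist_epi h x)); lra.
  - split; auto. apply lll_iff; auto.
    assert (Fl : forall t, eta_l f k + e <= t <= eta_r f k - e -> g t <> PInf /\ h t <> PInf).
    { intros t Ht. specialize (Mg t Ht). specialize (Mh t Ht).
      rewrite (fsharp_in' f k e t Hf He Ht) in Mg, Mh.
      destruct (ER_lt_fin _ _ Mg) as [x [E1 _]]. destruct (ER_lt_fin _ _ Mh) as [y [F1 _]].
      split; congruence. }
    destruct (Fl (eta_l f k + e) ltac:(lra)) as [GL HL].
    destruct (Fl (eta_r f k - e) ltac:(lra)) as [GR HR].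
    split; [|split].
    + exists (Rmax tg1 th1). split; [|apply Rmax_lub_lt; auto].
      assert (g (Rmax tg1 th1) <> PInf).
      { apply (conv_fin g tg1 (eta_l f k + e)); auto. split. apply Rmax_l. left; apply Rmax_lub_lt; auto. }
      assert (h (Rmax tg1 th1) <> PInf).
      { apply (conv_fin h th1 (eta_l f k + e)); auto. split. apply Rmax_r. left; apply Rmax_lub_lt; auto. }
      unfold dom. rewrite (comb_fin a g h _ _ _ (fv_eq g _ H) (fv_eq h _ H0)). discriminate.
    + exists (Rmin tg2 th2). split; [|apply Rmin_glb_lt; auto].
      assert (g (Rmin tg2 th2) <> PInf).
      { apply (conv_fin g (eta_r f k - e) tg2); auto. split. left; apply Rmin_glb_lt; auto. apply Rmin_l. }
      assert (h (Rmin tg2 th2) <> PInf).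
      { apply (conv_fin h (eta_r f k - e) th2); auto. split. left; apply Rmin_glb_lt; auto. apply Rmin_r. }
      unfold dom. rewrite (comb_fin a g h _ _ _ (fv_eq g _ H) (fv_eq h _ H0)). discriminate.
    + intros t Ht. specialize (Mg t Ht). specialize (Mh t Ht).
      rewrite (fsharp_in' f k e t Hf He Ht) in Mg, Mh |- *.
      destruct (ER_lt_fin _ _ Mg) as [x [E1 E2]]. destruct (ER_lt_fin _ _ Mh) as [y [F1 F2]].
      rewrite (comb_fin a g h t x y E1 F1). simpl. nra.
Qed.

Lemma inv_lt_of a b : 0 < a -> / a < b -> / b < a.
Proof.
  intros Ha H. assert (0 < / a) by (apply Rinv_0_lt_compat; auto).
  rewrite <- (Rinv_inv a). apply Rinv_lt_contravar; [nra|auto].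
Qed.

Lemma interp_bound lam D u U : 0 < lam -> lam <= u -> 0 <= u -> D <= U -> 0 <= U ->
  lam * D <= u * U.
Proof.
  intros H1 H2 H3 H4 H5. destruct (Rle_dec D 0).
  - assert (lam * D <= 0) by nra. nra.
  - apply Rmult_le_compat; lra.
Qed.

Lemma part_open f k e g : XM f -> f 0 = Fin 1 -> (0 < k)%nat -> eps_ok f k e -> A f k e g ->
  exists m, (0 < m)%nat /\ forall h, V m g h -> A f k e h.
Proof.
  intros Hf Hf0 Hk He [[Xg [cg [Hcg Hg]]] [_ Wg]].
  pose proof (eps_basic f k e He) as Hb. pose proof (qq_pos k Hk) as Hq.
  pose proof (lt_0_INR k Hk) as HkR.
  apply (lll_iff f k e g Hf He) in Wg.
  destruct Wg as [[t1 [D1 T1]] [[t2 [D2 T2]] Mg]].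
  assert (Cg : convex g) by apply Xg.
  assert (Gfin : forall t, t1 <= t <= t2 -> g t <> PInf) by (intros; apply (conv_fin g t1 t2); auto).
  assert (Ffin : forall t, eta_l f k + e <= t <= eta_r f k - e -> f t <> PInf)
    by (intros; apply (f_fin f k e); auto; lra).
  destruct (pos_lb (fun t => fv f t + qq k - fv g t) (eta_l f k + e) (eta_r f k - e)) as [del [Hdel Hgap]].
  { lra. }
  { intros t Ht. specialize (Mg t Ht). rewrite (fsharp_in' f k e t Hf He Ht) in Mg.
    destruct (ER_lt_fin _ _ Mg) as [x [E1 E2]]. rewrite (fv_fin _ _ _ E1). lra. }
  { intros x Hx c Hc. set (w := (fv f x + qq k - fv g x - c) / 2).
    assert (Hw : 0 < w) by (unfold w; lra).
    destruct Hf as [Lf _].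
    destruct (Lf x (fv f x - w)) as [d1 [Hd1 H1]].
    { rewrite (fv_eq f x (Ffin x Hx)). simpl. lra. }
    destruct (conv_usc g t1 t2 x (fv g x + w) Cg D1 D2 ltac:(lra) ltac:(lra)) as [d2 [Hd2 H2]].
    exists (Rmin d1 d2). split; [apply Rmin_pos; auto|]. intros y Hy Hyx.
    specialize (H1 y ltac:(eapply Rlt_le_trans; [exact Hyx|apply Rmin_l])).
    specialize (H2 y ltac:(eapply Rlt_le_trans; [exact Hyx|apply Rmin_r])).
    rewrite (fv_eq f y (Ffin y Hy)) in H1. simpl in H1. destruct H2 as [_ H2]. unfold w in *. lra. }
  simpl in Hgap.
  set (Mb := Rmax (fv g t1) (fv g t2)).
  assert (HMb : forall t, t1 <= t <= t2 -> 0 <= fv g t <= Mb).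
  { intros t Ht. split. apply fv_nonneg; auto. apply conv_bound; auto. }
  assert (HMb0 : 0 <= Mb) by (pose proof (HMb t1 ltac:(lra)); lra).
  set (sig := Rmin (eta_l f k + e - t1) (t2 - (eta_r f k - e))).
  assert (Hs1 : sig <= eta_l f k + e - t1) by apply Rmin_l.
  assert (Hs2 : sig <= t2 - (eta_r f k - e)) by apply Rmin_r.
  assert (Hs0 : 0 < sig) by (unfold sig; apply Rmin_pos; lra).
  set (K2 := 2 * (Mb + 1) / sig).
  assert (HK2 : 0 <= K2) by (unfold K2; apply Rle_mult_inv_pos; lra).
  set (eta := Rmin (Rmin 1 (sig / 2)) (del / (2 * (1 + K2)))).
  assert (He1 : eta <= 1) by (unfold eta; eapply Rle_trans; [apply Rmin_l|apply Rmin_l]).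
  assert (He2 : eta <= sig / 2) by (unfold eta; eapply Rle_trans; [apply Rmin_l|apply Rmin_r]).
  assert (He3 : eta <= del / (2 * (1 + K2))) by (unfold eta; apply Rmin_r).
  assert (He0 : 0 < eta).
  { unfold eta. repeat apply Rmin_pos; try lra. apply Rdiv_lt_0_compat; lra. }
  assert (HeK : eta + eta * K2 < del).
  { assert (eta * (1 + K2) <= del / (2 * (1 + K2)) * (1 + K2)) by (apply Rmult_le_compat_r; lra).
    replace (del / (2 * (1 + K2)) * (1 + K2)) with (del / 2) in H by (field; lra). lra. }
  set (B := Rmax (Rmax (Rabs t1) (Rabs t2)) Mb).
  destruct (nat_big (Rmax (Rmax (INR k) B) (Rmax (/ eta) (/ (/ INR k - cg))))) as [m [Hm HmR]].
  assert (Hm1 : INR k < INR m) by (eapply Rle_lt_trans; [|exact HmR]; eapply Rle_trans; [apply Rmax_l|apply Rmax_l]).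
  assert (Hm2 : B < INR m) by (eapply Rle_lt_trans; [|exact HmR]; eapply Rle_trans; [apply Rmax_r|apply Rmax_l]).
  assert (Hm3 : / eta < INR m) by (eapply Rle_lt_trans; [|exact HmR]; eapply Rle_trans; [apply Rmax_l|apply Rmax_r]).
  assert (Hm4 : / (/ INR k - cg) < INR m) by (eapply Rle_lt_trans; [|exact HmR]; eapply Rle_trans; [apply Rmax_r|apply Rmax_r]).
  assert (Hi3 : / INR m < eta) by (apply inv_lt_of; auto).
  assert (Hi4 : / INR m < / INR k - cg) by (apply inv_lt_of; auto; lra).
  exists m. split; auto.
  intros h [Xh [ch [Hch Hh]]].
  assert (Ch : convex h) by apply Xh.
  assert (Appr : forall t, t1 <= t <= t2 -> exists s hs, Rabs (s - t) < eta /\ h s = Fin hs /\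
                   hs < fv g t + eta).
  { intros t Ht. set (p := (t, fv g t)).
    assert (Ep : epi g p) by (unfold epi, p; cbn [fst snd]; rewrite (fv_eq g t (Gfin t Ht)); simpl; lra).
    assert (Bp : boxd (0, 0) p <= INR m).
    { unfold p. apply boxd_le_iff; cbn [fst snd]. rewrite !Rminus_0_l, !Rabs_Ropp.
      assert (Rabs t <= B).
      { unfold B. eapply Rle_trans; [|apply Rmax_l].
        destruct (Rle_dec 0 t).
        - rewrite Rabs_right by lra. eapply Rle_trans; [|apply Rmax_r].
          rewrite (Rabs_right t2) by lra. lra.
        - rewrite Rabs_left by lra. eapply Rle_trans; [|apply Rmax_l].
          destruct (Rle_dec 0 t1). lra. rewrite (Rabs_left t1) by lra. lra. }
      destruct (HMb t Ht). rewrite (Rabs_right (fv g t)) by lra.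
      assert (Mb <= B) by apply Rmax_r. split; lra. }
    specialize (Hh p Bp). rewrite (dist_in g p (XM_ne g Xg) Ep) in Hh.
    apply abs_le_iff in Hh.
    destruct (dist_approx h p eta (XM_ne h Xh) ltac:(lra)) as [[s w] [Hy Hpy]].
    apply boxd_lt_iff in Hpy. unfold p in Hpy. cbn [fst snd] in Hpy. destruct Hpy as [P1 P2].
    unfold epi in Hy. cbn [fst snd] in Hy. destruct (ER_le_fin _ _ Hy) as [hs [E1 E2]].
    exists s, hs. repeat split; auto.
    - rewrite Rabs_minus_sym. exact P1.
    - apply abs_lt_iff in P2. lra. }
  destruct (Appr t1 ltac:(lra)) as [s1 [hs1 [S1 [E1 F1]]]].
  destruct (Appr t2 ltac:(lra)) as [s2 [hs2 [S2 [E2 F2]]]].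
  apply abs_lt_iff in S1. apply abs_lt_iff in S2.
  assert (Hg1 := HMb t1 ltac:(lra)). assert (Hg2 := HMb t2 ltac:(lra)).
  assert (hs1_0 : 0 <= hs1) by (pose proof (fv_nonneg h s1 Xh) as Z; rewrite (fv_fin _ _ _ E1) in Z; exact Z).
  assert (hs2_0 : 0 <= hs2) by (pose proof (fv_nonneg h s2 Xh) as Z; rewrite (fv_fin _ _ _ E2) in Z; exact Z).
  split.
  - split; auto. exists (ch + cg). split; [lra|].
    intros x Hx. assert (Hx' : boxd (0,0) x <= INR m) by lra.
    specialize (Hh x Hx'). specialize (Hg x Hx).
    apply abs_le_iff in Hh. apply abs_le_iff in Hg. apply abs_le_iff. lra.
  - split; auto. apply lll_iff; auto. split; [|split].
    + exists s1. split; [unfold dom; congruence|lra].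
    + exists s2. split; [unfold dom; congruence|lra].
    + intros t Ht. rewrite (fsharp_in' f k e t Hf He Ht).
      specialize (Hgap t Ht).
      destruct (Appr t ltac:(lra)) as [s [hs [S [E F]]]]. apply abs_lt_iff in S.
      assert (hs_0 : 0 <= hs) by (pose proof (fv_nonneg h s Xh) as Z; rewrite (fv_fin _ _ _ E) in Z; exact Z).
      assert (Goal : exists ht, h t = Fin ht /\ ht < fv g t + eta + eta * K2).
      { destruct (Rtotal_order s t) as [Hst|[Hst|Hst]].
        - destruct (conv_at h s s2 t hs hs2 Ch ltac:(lra) E E2) as [ht [G1 G2]].
          exists ht. split; auto.
          set (lam := (t - s) / (s2 - s)) in *.
          assert (Hl : lam * (s2 - s) = t - s) by (unfold lam; field; lra).
          assert (Hl0 : 0 < lam) by (unfold lam; apply Rdiv_lt_0_compat; lra).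
          assert (Hlu : lam <= 2 * eta / sig).
          { assert (lam * (sig / 2) <= lam * (s2 - s)) by (apply Rmult_le_compat_l; lra).
            apply (Rmult_le_reg_r (sig / 2)); [lra|].
            replace (2 * eta / sig * (sig / 2)) with eta by (field; lra). lra. }
          assert (lam * (hs2 - hs) <= (2 * eta / sig) * (Mb + 1)).
          { apply interp_bound; try lra; apply Rle_mult_inv_pos; lra. }
          replace (2 * eta / sig * (Mb + 1)) with (eta * K2) in H by (unfold K2; field; lra).
          lra.
        - subst. exists hs. split; auto. assert (0 <= eta * K2) by nra. lra.
        - destruct (conv_at2 h s1 s t hs1 hs Ch ltac:(lra) E1 E) as [ht [G1 G2]].
          exists ht. split; auto.
          set (lam := (s - t) / (s - s1)) in *.
          assert (Hl : lam * (s - s1) = s - t) by (unfold lam; field; lra).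
          assert (Hl0 : 0 < lam) by (unfold lam; apply Rdiv_lt_0_compat; lra).
          assert (Hlu : lam <= 2 * eta / sig).
          { assert (lam * (sig / 2) <= lam * (s - s1)) by (apply Rmult_le_compat_l; lra).
            apply (Rmult_le_reg_r (sig / 2)); [lra|].
            replace (2 * eta / sig * (sig / 2)) with eta by (field; lra). lra. }
          assert (lam * (hs1 - hs) <= (2 * eta / sig) * (Mb + 1)).
          { apply interp_bound; try lra; apply Rle_mult_inv_pos; lra. }
          replace (2 * eta / sig * (Mb + 1)) with (eta * K2) in H by (unfold K2; field; lra).
          lra. }
      destruct Goal as [ht [G1 G2]]. rewrite G1. simpl. lra.
Qed.

Theorem mainTheorem6 (f : fn) (Hf : XM f) (Hf0 : f 0 = Fin 1)
  (Hdom : exists t, t <> 0 /\ dom f t)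
  (eps : nat -> R) (Heps : forall k, (0 < k)%nat -> eps_ok f k (eps k)) :
  (forall k, (0 < k)%nat ->
     AW_open (A f k (eps k)) /\
     A f k (eps k) f /\
     (forall g h a, A f k (eps k) g -> A f k (eps k) h -> 0 <= a <= 1 ->
        A f k (eps k) (comb a g h))) /\
  (forall k, (0 < k)%nat -> forall h, A f (2 * k)%nat (eps (2 * k)%nat) h -> V k f h) /\
  (forall U, AW_open U -> U f ->
     exists k, (0 < k)%nat /\ forall h, A f k (eps k) h -> U h).
Proof.
  split; [|split].
  - intros k Hk. pose proof (Heps k Hk) as He. split; [|split].
    + split.
      * intros g [[X _] _]. exact X.
      * intros g Ag. apply (part_open f k (eps k) g); auto.
    + apply part_self; auto.
    + intros g h a Ag Ah Ha. apply part_conv; auto.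
  - intros k Hk h Ah. apply (part2 f k (eps (2 * k)%nat)); auto. apply Heps. lia.
  - intros U [HU1 HU2] Uf. destruct (HU2 f Uf) as [k0 [Hk0 HV]].
    exists (2 * k0)%nat. split; [lia|]. intros h Ah. apply HV.
    apply (part2 f k0 (eps (2 * k0)%nat)); auto. apply Heps. lia.
Qed.
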